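(* Let $1\le k\le n$ and $1\le m<n$ be integers. Let $\mathcal{C}=\{d_1,\dots,d_n\}$ be a corpus of $n$ items of which exactly $m$ are designated useful (set $\mathcal{C}^+$) and the remaining $n-m$ non-useful (set $\mathcal{C}^-$). Define $\mathrm{MU}(i)=\mathbb{1}[i\le k]$ for ranks $i\in\{1,\dots,n\}$. Let $\pi$ be any probability distribution over the set $S_n$ of rankings (permutations) of $\mathcal{C}$, and let $\epsilon\in\mathbb{R}^n$ be its expected exposure vector, $\epsilon_d=\sum_{\sigma\in S_n}\pi(\sigma)\,\mathrm{MU}(\bar\sigma_d)$, where $\bar\sigma_d$ is the rank of $d$ in $\sigma$. Define the target exposure vector $\epsilon^*\in\mathbb{R}^n$ by: for useful $d\in\mathcal{C}^+$, $\epsilon^*_d=1$ if $m\le k$ and $\epsilon^*_d=k/m$ if $m>k$; for non-useful $d\in\mathcal{C}^-$, $\epsilon^*_d=\frac{k-m}{n-m}$ if $m\le k$ and $\epsilon^*_d=0$ if $m>k$. Then $$\langle \epsilon,\epsilon^*\rangle\in\big[0,\ \|\epsilon^*\|_2^2\big].$$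
   Context: $\epsilon^*$ is the expected exposure of items under an oracle stochastic retriever that always ranks all useful items above all non-useful items, uniformly at random within each group, under the top-$k$ machine-user browsing model. The quantity $\langle\epsilon,\epsilon^*\rangle$ is called the expected exposure relevance (EE-R) of the policy $\pi$. *)

(* Defs.v *)
From mathcomp Require Import all_boot all_order all_algebra all_fingroup.
Set Implicit Arguments. Unset Strict Implicit. Unset Printing Implicit Defensive.
Import Order.TTheory GRing.Theory Num.Theory.
Local Open Scope ring_scope.

(* Items are 'I_n (d_1..d_n as 0..n-1). A ranking sigma : {perm 'I_n} maps an
   item d to its 0-based rank, so the 1-based rank bar-sigma_d is sigma d + 1. *)

Definition MU (R : ringType) (k i : nat) : R := if (i <= k)%N then 1 else 0.

Definition is_distr (R : numDomainType) (n : nat) (pi : {ffun {perm 'I_n} -> R}) :=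
  (forall s, 0 <= pi s) /\ \sum_s pi s = 1.

Definition exposure (R : ringType) (n k : nat) (pi : {ffun {perm 'I_n} -> R})
  (d : 'I_n) : R :=
  \sum_(s : {perm 'I_n}) pi s * MU R k (s d).+1.

Definition target (R : fieldType) (n k : nat) (U : {set 'I_n}) (d : 'I_n) : R :=
  let m := #|U| in
  if d \in U then (if (m <= k)%N then 1 else k%:R / m%:R)
  else (if (m <= k)%N then (k%:R - m%:R) / (n%:R - m%:R) else 0).

Definition dotv (R : ringType) (n : nat) (x y : 'I_n -> R) : R :=
  \sum_(d : 'I_n) x d * y d.

(* Main.v *)
Require Import Defs.
From mathcomp Require Import all_boot all_order all_algebra all_fingroup.
From mathcomp Require Import ring lra.
Import Order.TTheory GRing.Theory Num.Theory.
Local Open Scope ring_scope.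

Lemma MU01 (R : numDomainType) k i : 0 <= MU R k i /\ MU R k i <= 1.
Proof. by rewrite /MU; case: ifP => _; rewrite ?lexx ?ler01. Qed.

Lemma exp_bounds (R : realFieldType) n k (pi : {ffun {perm 'I_n} -> R}) d :
  is_distr pi -> 0 <= exposure k pi d /\ exposure k pi d <= 1.
Proof.
case=> H0 H1; rewrite /exposure; split.
  by apply: sumr_ge0 => s _; apply: mulr_ge0 => //; case: (MU01 R k (s d).+1).
rewrite -H1; apply: ler_sum => s _; rewrite -[X in _ <= X]mulr1.
by apply: ler_wpM2l => //; case: (MU01 R k (s d).+1).
Qed.

Lemma sum_MU (R : realFieldType) n k : (k <= n)%N ->
  \sum_(i < n) MU R k i.+1 = k%:R.
Proof.
move=> kn.
rewrite -(big_mkord xpredT (fun i => MU R k i.+1)) (big_cat_nat (leq0n k) kn) /=.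
rewrite (@eq_big_nat _ _ _ 0 k _ (fun=> 1)); last first.
  by move=> i /andP [_ ik]; rewrite /MU ik.
rewrite (@eq_big_nat _ _ _ k n _ (fun=> 0)); last first.
  by move=> i /andP [ki _]; rewrite /MU ltnNge ki.
by rewrite !sumr_const_nat subn0 mul0rn addr0.
Qed.

Lemma sum_exp (R : realFieldType) n k (pi : {ffun {perm 'I_n} -> R}) :
  (k <= n)%N -> is_distr pi -> \sum_d exposure k pi d = k%:R.
Proof.
move=> kn [H0 H1]; rewrite /exposure exchange_big /=.
under eq_bigr => s _.
  rewrite -mulr_sumr.
  have -> : \sum_(d < n) MU R k (s d).+1 = \sum_(i < n) MU R k i.+1.
    by rewrite (reindex_inj (@perm_inj _ s^-1)) /=; apply: eq_bigr => i _; rewrite permKV.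
  rewrite sum_MU //.
  over.
by rewrite -mulr_suml H1 mul1r.
Qed.

Theorem theorem2 (R : realFieldType) (n k m : nat) (U : {set 'I_n})
  (pi : {ffun {perm 'I_n} -> R}) :
  (1 <= k)%N -> (k <= n)%N -> (1 <= m)%N -> (m < n)%N -> #|U| = m ->
  is_distr pi ->
  0 <= dotv (exposure k pi) (target R k U) /\
  dotv (exposure k pi) (target R k U) <= dotv (target R k U) (target R k U).
Proof.
move=> k1 kn m1 mn Um Hpi.
set e := exposure k pi.
have eb := fun d => @exp_bounds R n k pi d Hpi.
have se := @sum_exp R n k pi kn Hpi.
set tU : R := if (m <= k)%N then 1 else k%:R / m%:R.
set tN : R := if (m <= k)%N then (k%:R - m%:R) / (n%:R - m%:R) else 0.
have tE d : target R k U d = if d \in U then tU else tN by rewrite /target Um.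
set a := \sum_(d in U) e d.
set b := \sum_(d | d \notin U) e d.
have ab : a + b = k%:R by rewrite -se (bigID (mem U)).
have a0 : 0 <= a by apply: sumr_ge0 => d _; case: (eb d).
have b0 : 0 <= b by apply: sumr_ge0 => d _; case: (eb d).
have am : a <= m%:R.
  rewrite -Um -sumr_const; apply: ler_sum => d _; by case: (eb d).
have cN : #|[pred d : 'I_n | d \notin U]| = (n - m)%N.
  rewrite -[X in (X - m)%N](card_ord n) -(cardsC U) Um addKn.
  by apply: eq_card => d; rewrite !inE.
have D1 : dotv e (target R k U) = a * tU + b * tN.
  rewrite /dotv (bigID (mem U)) /= mulr_suml mulr_suml; congr (_ + _);
  by apply: eq_bigr => d Hd; rewrite tE ?Hd ?(negbTE Hd).
have cN' : #|(fun i : 'I_n => i \notin U)| = (n - m)%N.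
  by rewrite -cN; apply: eq_card.
have S1 : \sum_(d in U) target R k U d * target R k U d = m%:R * tU * tU.
  rewrite (eq_bigr (fun=> tU * tU)); last by move=> d Hd; rewrite tE Hd.
  by rewrite sumr_const Um -mulrA mulr_natl.
have S2 : \sum_(d | d \notin U) target R k U d * target R k U d
    = (n - m)%:R * tN * tN.
  rewrite (eq_bigr (fun=> tN * tN)); last by move=> d Hd; rewrite tE (negbTE Hd).
  by rewrite sumr_const cN' -mulrA mulr_natl.
have D2 : dotv (target R k U) (target R k U) = m%:R * tU * tU + (n - m)%:R * tN * tN.
  by rewrite /dotv (bigID (mem U)) S1 S2.
rewrite D1 D2.
have nm : (n%:R - m%:R : R) > 0 by rewrite subr_gt0 ltr_nat.
have mR : (m%:R : R) > 0 by rewrite ltr0n.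
rewrite natrB ?(ltnW mn) //.
rewrite /tU /tN; case: ifP => mk.
  set c := (k%:R - m%:R) / (n%:R - m%:R).
  have hc : c * (n%:R - m%:R) = k%:R - m%:R by rewrite /c mulfVK // gt_eqF.
  have kmR : (m%:R : R) <= k%:R by rewrite ler_nat.
  have knR : (k%:R : R) <= n%:R by rewrite ler_nat.
  have c0 : 0 <= c by apply: divr_ge0; [rewrite subr_ge0 | exact: ltW].
  have c1 : c <= 1 by rewrite /c ler_pdivrMr // mul1r lerD2r.
  have bE : b = k%:R - a by rewrite -ab; ring.
  split; first by rewrite mulr1; apply: addr_ge0 => //; apply: mulr_ge0.
  have -> : (n%:R - m%:R) * c * c = c * (k%:R - m%:R) by rewrite -hc; ring.
  rewrite -subr_ge0 bE.
  have -> : m%:R * 1 * 1 + c * (k%:R - m%:R) - (a * 1 + (k%:R - a) * c)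
     = (m%:R - a) * (1 - c) by ring.
  by apply: mulr_ge0; rewrite subr_ge0.
have km : (k%:R : R) < m%:R by rewrite ltr_nat ltnNge mk.
have -> : m%:R * (k%:R / m%:R) * (k%:R / m%:R) = k%:R * (k%:R / m%:R) :> R.
  by rewrite [m%:R * _]mulrC mulfVK ?gt_eqF.
have q0 : 0 <= (k%:R / m%:R : R) by rewrite divr_ge0 // ltW.
rewrite !mulr0 !addr0; split; first exact: mulr_ge0.
apply: ler_wpM2r => //; lra.
Qed.
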